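(* Let $h,n\geq 2$ be integers. Every subgroup $U$ of $\{id\}\times S_n\leq G=S_h\times S_n$ is a neutrality group with respect to $(h,n)$, i.e. there exists a social preference function $F$ with $G_2(F)=U$. In particular, the set of neutrality groups with respect to $(h,n)$ is closed under taking subgroups and under conjugation by elements of $G$.
   Context: Permutations compose as $(\sigma\tau)(x)=\sigma(\tau(x))$; $[k]=\{1,\dots,k\}$. Let $H=[h]$ (individuals), $N=[n]$ (alternatives), $G=S_h\times S_n$. Linear orders on $N$ are identified with elements of $S_n$, and the set of preference profiles is $\mathcal{P}=(S_n)^h$. $G$ acts on $\mathcal{P}$ by $(p^{(\varphi,\psi)})_i=\psi\,p_{\varphi^{-1}(i)}$ for $i\in H$. A social preference function (SPF) is any function $F:\mathcal{P}\to S_n$. The symmetry group of $F$ is $G(F)=\{(\varphi,\psi)\in G: F(p^{(\varphi,\psi)})=\psi F(p)\ \forall p\in\mathcal{P}\}$, and its neutrality group is $G_2(F)=G(F)\cap(\{id\}\times S_n)$. A subgroup $U\leq\{id\}\times S_n$ is a neutrality group with respect to $(h,n)$ if $U=G_2(F)$ for some SPF $F$. *)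

(* Defs.v *)
From mathcomp Require Import all_boot all_fingroup.
Set Implicit Arguments. Unset Strict Implicit. Unset Printing Implicit Defensive.
Local Open Scope group_scope.

(* Composition of permutations in the paper's convention:
   (pcomp s t) x = s (t x).  Note MathComp's product satisfies (s * t) x = t (s x). *)
Definition pcomp n (s t : 'S_n) : 'S_n := t * s.

(* Preference profiles: h-tuples of linear orders on N = [n], i.e. elements of (S_n)^h.
   Individuals are indexed by 'I_h and alternatives by 'I_n. *)
Definition profile (h n : nat) := {ffun 'I_h -> 'S_n}.

Definition pact h n (phi : 'S_h) (psi : 'S_n) (p : profile h n) : profile h n :=
  [ffun i => pcomp psi (p (phi^-1 i))].

Definition SPF (h n : nat) := profile h n -> 'S_n.

Definition symmetry_group h n (F : SPF h n) : {set 'S_h * 'S_n} :=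
  [set g : 'S_h * 'S_n | [forall p : profile h n,
      F (pact g.1 g.2 p) == pcomp g.2 (F p)]].

Definition neutrality_group_of h n (F : SPF h n) : {set 'S_h * 'S_n} :=
  symmetry_group F :&: setX [set 1] [set: 'S_n].

Definition is_neutrality_group h n (V : {set 'S_h * 'S_n}) : Prop :=
  exists F : SPF h n, neutrality_group_of F = V.

Definition id_times h n (U : {set 'S_n}) : {set 'S_h * 'S_n} :=
  [set ((1 : 'S_h), u) | u in U].

Definition conjG h n (phi : 'S_h) (psi : 'S_n) (V : {set 'S_h * 'S_n})
  : {set 'S_h * 'S_n} :=
  [set (phi * x.1 * phi^-1, psi * x.2 * psi^-1) | x in V].

(* Main.v *)
Require Import Defs.
From mathcomp Require Import all_boot all_fingroup.
Local Open Scope group_scope.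
Set Implicit Arguments. Unset Strict Implicit. Unset Printing Implicit Defensive.

Lemma pact1 h n (s : 'S_n) (p : profile h n) : pact 1 s p = [ffun i => p i * s].
Proof. by apply/ffunP => i; rewrite !ffunE /pcomp invg1 perm1. Qed.

Lemma pact1M h n (s t : 'S_n) (p : profile h n) :
  pact 1 s (pact 1 t p) = pact 1 (t * s) p.
Proof. by apply/ffunP => i; rewrite !pact1 !ffunE mulgA. Qed.

Lemma pact11 h n (p : profile h n) : pact 1 1 p = p.
Proof. by apply/ffunP => i; rewrite !pact1 !ffunE mulg1. Qed.

Lemma sym1P h n (F : SPF h n) (b : 'S_n) :
  reflect (forall p, F (pact 1 b p) = F p * b) (((1 : 'S_h), b) \in symmetry_group F).
Proof.
rewrite inE /=; apply: (iffP forallP) => H p; first by apply/eqP; exact: H.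
by apply/eqP; exact: H.
Qed.

Definition Fconj h n (F : SPF h n) (c : 'S_n) : SPF h n :=
  fun p => F (pact 1 c p) * c^-1.

Lemma key h n (F : SPF h n) (c b : 'S_n) :
  (((1 : 'S_h), b) \in symmetry_group (Fconj F c)) =
  (((1 : 'S_h), c^-1 * b * c) \in symmetry_group F).
Proof.
apply/sym1P/sym1P => H q; rewrite /Fconj in H *.
- have := H (pact 1 c^-1 q).
  rewrite !pact1M mulVg pact11 mulgA => E.
  by apply: (mulIg c^-1); rewrite E !mulgA mulgK.
- rewrite pact1M.
  have := H (pact 1 c q); rewrite pact1M => E.
  have -> : b * c = c * (c^-1 * b * c) by rewrite !mulgA mulgV mul1g.
  by rewrite E !mulgA mulgK.
Qed.

Theorem mainTheorem1 (h n : nat) (hh : 2 <= h) (hn : 2 <= n) :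
  (forall U : {group 'S_n}, is_neutrality_group (id_times h U))
  /\ (forall U U' : {group 'S_n}, is_neutrality_group (id_times h U) ->
        U' \subset U -> is_neutrality_group (id_times h U'))
  /\ (forall (V : {set 'S_h * 'S_n}) (phi : 'S_h) (psi : 'S_n),
        is_neutrality_group V -> is_neutrality_group (conjG phi psi V)).
Proof.
have P1 : forall U : {group 'S_n}, is_neutrality_group (id_times h U).
  move=> U.
  have h0 : 0 < h by apply: leq_trans hh.
  pose i0 : 'I_h := Ordinal h0.
  have n0 : 1 < n by [].
  pose x : 'S_n := tperm (Ordinal (ltnW n0)) (Ordinal n0).
  have x1 : x != 1.
    apply/eqP => /permP /(_ (Ordinal (ltnW n0))).
    by rewrite tpermL perm1 => /(congr1 val).
  pose r (t : 'S_n) := if t \in U then 1 else x.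
  exists (fun p => r (p i0) * p i0).
  apply/setP => -[a b]; rewrite in_setI in_setX in_set1 in_setT andbT /=.
  apply/idP/imsetP.
  - case/andP => Hs /eqP Ea; subst a; exists b => //.
    move/sym1P: Hs => /(_ [ffun=> 1]); rewrite pact1 !ffunE mul1g /r group1 mulg1.
    by case: ifP => // _ /mulIg E; rewrite E eqxx in x1.
  - case=> u uU [-> ->]; rewrite eqxx andbT; apply/sym1P => p.
    by rewrite pact1 ffunE /r groupMr // mulgA.
split => //; split; first by move=> U U' _ _; exact: P1.
move=> V phi psi [F <-]; exists (Fconj F psi).
apply/setP => -[a b]; rewrite in_setI in_setX in_set1 in_setT andbT /=.
apply/idP/imsetP.
- case/andP => Hs /eqP Ea; subst a; exists (1, psi^-1 * b * psi).
    by rewrite in_setI in_setX in_set1 in_setT andbT /= -key Hs eqxx.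
  by rewrite /= mulg1 mulgV !mulgA mulgV mul1g mulgK.
- case=> -[a' b']; rewrite in_setI in_setX in_set1 in_setT andbT /=.
  case/andP => Hs /eqP Ea; subst a' => -[-> ->].
  rewrite mulg1 mulgV eqxx andbT key.
  by rewrite !mulgA mulVg mul1g mulgKV.
Qed.
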